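(* For every $n$ such that $Y_n=k\in\{1,\dots,N-1\}$: (1) if $Y_{n+1}=k+1$ then $\begin{pmatrix}U_{n+1}\\ V_{n+1}\end{pmatrix}=\bar B_k^+\begin{pmatrix}U_n\\ V_n\end{pmatrix}$ with $\bar B_k^+=\begin{pmatrix}1-\frac{N-k}{2N(k+1)} & \frac{N-k}{2N(k+1)}\\ 0 & 1\end{pmatrix}$; (2) if $Y_{n+1}=k-1$ then $\begin{pmatrix}U_{n+1}\\ V_{n+1}\end{pmatrix}=\bar B_k^-\begin{pmatrix}U_n\\ V_n\end{pmatrix}$ with $\bar B_k^-=\begin{pmatrix}1 & 0\\ \frac{k}{2N(N-k+1)} & 1-\frac{k}{2N(N-k+1)}\end{pmatrix}$; (3) if $Y_{n+1}=k$ then $\begin{pmatrix}U_{n+1}\\ V_{n+1}\end{pmatrix}=\bar B_k^{(0)}\begin{pmatrix}U_n\\ V_n\end{pmatrix}$ with $$\bar B_k^{(0)}=\frac{k^2}{k^2+(1+s)(N-k)^2}\begin{pmatrix}1-\frac{N-k}{2kN} & \frac{N-k}{2kN}\\ 0 & 1\end{pmatrix}+\frac{(1+s)(N-k)^2}{k^2+(1+s)(N-k)^2}\begin{pmatrix}1 & 0\\ \frac{k}{2N(N-k)} & 1-\frac{k}{2N(N-k)}\end{pmatrix}.$$ In particular, if $T^Y_0<T^Y_N$ then $(U_{T^Y_0},V_{T^Y_0})^T=\begin{pmatrix}1&0\\ \frac{1}{2N^2}&\frac{2N^2-1}{2N^2}\end{pmatrix}(U_{T^Y_0-1},V_{T^Y_0-1})^T$,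 and if $T^Y_N<T^Y_0$ then $(U_{T^Y_N},V_{T^Y_N})^T=\begin{pmatrix}\frac{2N^2-1}{2N^2}&\frac{1}{2N^2}\\ 0&1\end{pmatrix}(U_{T^Y_N-1},V_{T^Y_N-1})^T$.
   Context: Biparental Moran model with selection at death. Fix an integer $N\ge 2$ and a real $s>0$; let $I=\{1,\dots,N\}$ be the set of sites, each occupied by one individual which is either advantaged or disadvantaged. Let $\mathcal{Y}_n\subseteq I$ be the set of sites of advantaged individuals at time $n\in\mathbb{Z}_+$ ($\mathcal{Y}_0$ is a given initial set) and $Y_n=|\mathcal{Y}_n|$. At each time step $n$, conditionally on the past: a ''mother'' site $\mu_n$ and a ''father'' site $\pi_n$ are drawn independently and uniformly from $I$, and independently a site $\kappa_n$ is drawn with $\mathbb{P}(\kappa_n=i)$ proportional to the death weight of $i$, which equals $1$ if $i\in\mathcal{Y}_n$ and $1+s$ if $i\notin\mathcal{Y}_n$. The individual at $\kappa_n$ dies and is replaced by an offspring of $\mu_n$ and $\pi_n$, whose type is that of the mother: $\mathcal{Y}_{n+1}=\mathcal{Y}_n\cup\{\kappa_n\}$ if $\mu_n\in\mathcal{Y}_n$ and $\mathcal{Y}_{n+1}=\mathcal{Y}_n\setminus\{\kappa_n\}$ if $\mu_n\notin\mathcal{Y}_n$; all other individuals are unchanged. Pedigree and ancestral weights: $\mathcal{G}_N$ denotes the random oriented graph on $I\times\mathbb{Z}_+$ with, for each $n$, arrows from $(\kappa_n,n+1)$ to $(\mu_n,n)$ and to $(\pi_n,n)$, and from $(i,n+1)$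 to $(i,n)$ for every $i\neq\kappa_n$. For $n\ge0$, the genealogy of a neutral gene sampled at time $n$ is the process $(X^{(n)}_k)_{0\le k\le n}$ which, conditionally on $\mathcal{G}_N$, is a Markov chain with: if $X^{(n)}_k=x\neq\kappa_{n-k-1}$ then $X^{(n)}_{k+1}=x$, and if $X^{(n)}_k=\kappa_{n-k-1}$ then $X^{(n)}_{k+1}$ equals $\mu_{n-k-1}$ or $\pi_{n-k-1}$ with probability $1/2$ each. Set $A_n(i,j)=\mathbb{P}(X^{(n)}_n=j\mid X^{(n)}_0=i,\mathcal{G}_N)$ and $$\Xi^A_n=\frac{1}{Y_n}\sum_{l\in\mathcal{Y}_n}\sum_{l'\in\mathcal{Y}_0}A_n(l,l'),\qquad \Xi^B_n=\frac{1}{N-Y_n}\sum_{l\notin\mathcal{Y}_n}\sum_{l'\in\mathcal{Y}_0}A_n(l,l')$$ (when the denominators are nonzero). Let $\mathcal{F}^Y_n=\sigma(Y_0,\dots,Y_n)$, $U_n=\mathbb{E}(\Xi^A_n\mid\mathcal{F}^Y_n)$, $V_n=\mathbb{E}(\Xi^B_n\mid\mathcal{F}^Y_n)$ (so $U_0=1$, $V_0=0$). For $y\in\{0,\dots,N\}$, $T^Y_y=\inf\{n:Y_n=y\}$ (with $\inf\emptyset=\infty$). *)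

(* Defs.v *)
From HB Require Import structures.
From mathcomp Require Import all_boot all_order all_algebra.
Set Implicit Arguments. Unset Strict Implicit. Unset Printing Implicit Defensive.
Import Order.TTheory GRing.Theory Num.Theory.
Local Open Scope ring_scope.

Section Moran.
Variables (R : realFieldType) (N : nat) (s : R).

(* One time step draws (mother mu_n, father pi_n, killed site kappa_n). *)
Definition draw := ('I_N * 'I_N * 'I_N)%type.
Definition d_mu (d : draw) : 'I_N := d.1.1.
Definition d_pi (d : draw) : 'I_N := d.1.2.
Definition d_ka (d : draw) : 'I_N := d.2.

(* Update of the set of advantaged sites. *)
Definition step (Y : {set 'I_N}) (d : draw) : {set 'I_N} :=
  if d_mu d \in Y then d_ka d |: Y else Y :\ d_ka d.

Definition config (Y0 : {set 'I_N}) (ds : seq draw) : {set 'I_N} :=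
  foldl step Y0 ds.

Definition dweight (Y : {set 'I_N}) (i : 'I_N) : R :=
  if i \in Y then 1 else 1 + s.

Definition tprob (Y : {set 'I_N}) (d : draw) : R :=
  (N%:R)^-1 * (N%:R)^-1 * (dweight Y (d_ka d) / \sum_(j : 'I_N) dweight Y j).

Fixpoint pathprob (Y : {set 'I_N}) (ds : seq draw) : R :=
  match ds with
  | [::] => 1
  | d :: ds' => tprob Y d * pathprob (step Y d) ds'
  end.

Definition Ypath (Y0 : {set 'I_N}) (ds : seq draw) : seq nat :=
  [seq #|config Y0 (take i ds)| | i <- iota 0 (size ds).+1].

(* Ancestral weights: genrev (rev ds) i j = A_n(i,j) where n = size ds,
   computed by one backward step of the genealogy at a time. *)
Fixpoint genrev (rds : seq draw) (i j : 'I_N) : R :=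
  match rds with
  | [::] => (i == j)%:R
  | d :: rds' =>
      if i == d_ka d then (genrev rds' (d_mu d) j + genrev rds' (d_pi d) j) / 2
      else genrev rds' i j
  end.
Definition Aw (ds : seq draw) (i j : 'I_N) : R := genrev (rev ds) i j.

Definition XiA (Y0 : {set 'I_N}) (ds : seq draw) : R :=
  (#|config Y0 ds|%:R)^-1 *
  \sum_(l in config Y0 ds) \sum_(l' in Y0) Aw ds l l'.
Definition XiB (Y0 : {set 'I_N}) (ds : seq draw) : R :=
  ((N - #|config Y0 ds|)%:R)^-1 *
  \sum_(l in ~: config Y0 ds) \sum_(l' in Y0) Aw ds l l'.

Definition Yprob (Y0 : {set 'I_N}) (n : nat) (y : seq nat) : R :=
  \sum_(ds : n.-tuple draw | Ypath Y0 ds == y) pathprob Y0 ds.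

Definition condE (X : seq draw -> R) (Y0 : {set 'I_N}) (n : nat)
    (y : seq nat) : R :=
  (\sum_(ds : n.-tuple draw | Ypath Y0 ds == y) pathprob Y0 ds * X ds)
  / Yprob Y0 n y.

Definition Ucond (Y0 : {set 'I_N}) (n : nat) (y : seq nat) : R :=
  condE (XiA Y0) Y0 n y.
Definition Vcond (Y0 : {set 'I_N}) (n : nat) (y : seq nat) : R :=
  condE (XiB Y0) Y0 n y.

End Moran.

(* Main.v *)
Require Import Defs.
Set Warnings "-notation-overridden,-ambiguous-paths".
From HB Require Import structures.
From mathcomp Require Import all_boot all_order all_algebra.
From mathcomp Require Import ring lra zify.
Import Order.TTheory GRing.Theory Num.Theory.
Local Open Scope ring_scope.

Module Work.
Set Implicit Arguments. Unset Strict Implicit. Unset Printing Implicit Defensive.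

Section Helpers.
Variables (R : realFieldType) (N : nat) (s : R).

Lemma config_rcons (Y : {set 'I_N}) t d : config Y (rcons t d) = step (config Y t) d.
Proof. by rewrite /config foldl_rcons. Qed.

Lemma pathprob_rcons (Y : {set 'I_N}) t d :
  pathprob s Y (rcons t d) = pathprob s Y t * tprob s (config Y t) d.
Proof.
elim: t Y => [|d' t IH] Y /=; first by rewrite mul1r mulr1.
by rewrite IH mulrA.
Qed.

Lemma Ypath_rcons (Y : {set 'I_N}) t d :
  Ypath Y (rcons t d) = rcons (Ypath Y t) #|step (config Y t) d|.
Proof.
rewrite /Ypath size_rcons -(addn1 (size t).+1) iotaD map_cat /= add0n cats1.
congr (_ :: rcons _ _); first by rewrite !take0.
  apply/eq_in_map => i; rewrite mem_iota => /andP[_ hi].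
  by rewrite -cats1 takel_cat // -ltnS -(addn1 (size t)).
by rewrite take_oversize ?size_rcons // config_rcons.
Qed.

Lemma Aw_rcons (t : seq (draw N)) d i j : Aw R (rcons t d) i j =
  if i == d_ka d then (Aw R t (d_mu d) j + Aw R t (d_pi d) j) / 2 else Aw R t i j.
Proof. by rewrite /Aw rev_rcons. Qed.

End Helpers.

Section Sums.
Variables (R : realFieldType) (N : nat).

Lemma sum_draw3 (A B : {set 'I_N}) (f g h : 'I_N -> R) :
  \sum_(d : draw N | (d_mu d \in A) && (d_ka d \in B))
      f (d_mu d) * g (d_pi d) * h (d_ka d)
  = (\sum_(i in A) f i) * (\sum_j g j) * (\sum_(l in B) h l).
Proof.
transitivity (\sum_(p : 'I_N * 'I_N | p.1 \in A) \sum_(l in B) f p.1 * g p.2 * h l).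
  by rewrite pair_big.
transitivity (\sum_(i in A) \sum_(j : 'I_N) \sum_(l in B) f i * g j * h l).
  by rewrite [RHS]pair_big; apply: eq_bigl => p; rewrite andbT.
rewrite -mulrA big_distrl /=; apply: eq_bigr => i _.
rewrite big_distrl /= big_distrr /=; apply: eq_bigr => j _.
rewrite !big_distrr /=; apply: eq_bigr => l _; by rewrite !mulrA.
Qed.

Lemma sum_draw_lin (A B : {set 'I_N}) (h : 'I_N -> R) c0 c1 c2 c3 :
  \sum_(d : draw N | (d_mu d \in A) && (d_ka d \in B))
      (c0 + c1 * h (d_mu d) + c2 * h (d_pi d) + c3 * h (d_ka d))
  = c0 * (#|A|%:R * N%:R * #|B|%:R) + c1 * ((\sum_(i in A) h i) * N%:R * #|B|%:R)
    + c2 * (#|A|%:R * (\sum_j h j) * #|B|%:R) + c3 * (#|A|%:R * N%:R * (\sum_(l in B) h l)).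
Proof.
have cA : \sum_(i in A) (1:R) = #|A|%:R by rewrite sumr_const.
have cB : \sum_(i in B) (1:R) = #|B|%:R by rewrite sumr_const.
have cN : \sum_(i : 'I_N) (1:R) = N%:R by rewrite sumr_const card_ord.
rewrite !big_split /= -!mulr_sumr.
rewrite -cA -cB -cN -!sum_draw3.
rewrite [X in X + _ + _ + _ = _](_ : _ = c0 * \sum_(d | (d_mu d \in A) && (d_ka d \in B)) 1); last first.
  by rewrite mulr_sumr; apply: eq_bigr => *; rewrite mulr1.
congr (_ * _ + _ * _ + _ * _ + _ * _); apply: eq_bigr => d _; by rewrite ?mulr1 ?mul1r.
Qed.

End Sums.

Section Kernel.
Variables (R : realFieldType) (N : nat).
Implicit Types (C S : {set 'I_N}) (a : 'I_N -> R).

Lemma sum_mod S j (v : R) a :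
  \sum_(l in S) (if l == j then v else a l) =
  \sum_(l in S) a l + (if j \in S then v - a j else 0).
Proof.
case: (boolP (j \in S)) => jS.
  rewrite (big_setD1 j) //= eqxx [in RHS](big_setD1 j) //=.
  rewrite (eq_bigr a); last by move=> l; rewrite !inE => /andP[/negPf -> _].
  ring.
rewrite addr0; apply: eq_bigr => l lS.
by case: eqP lS => // ->; rewrite (negPf jS).
Qed.

Lemma sumU1 S j a : j \notin S -> \sum_(l in j |: S) a l = a j + \sum_(l in S) a l.
Proof. exact: big_setU1. Qed.

Lemma sumD1 S j a : j \in S -> \sum_(l in S :\ j) a l = \sum_(l in S) a l - a j.
Proof. by move=> jS; rewrite [X in _ = X - _](big_setD1 j) //= addrC addrK. Qed.

Lemma setCU1 C j : ~: (j |: C) = (~: C) :\ j.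
Proof. by apply/setP => l; rewrite !inE negb_or andbC. Qed.

Lemma setCD1 C j : ~: (C :\ j) = j |: ~: C.
Proof. by apply/setP => l; rewrite !inE negb_and negbK. Qed.

Lemma setU1_in C j : j \in C -> j |: C = C.
Proof. by move=> jC; apply/setP => l; rewrite !inE; case: eqP => // ->. Qed.

Lemma setD1_notin C j : j \notin C -> C :\ j = C.
Proof. by move=> jC; apply/setP => l; rewrite !inE; case: eqP => // ->; rewrite (negPf jC). Qed.

Definition ap a (d : draw N) l :=
  if l == d_ka d then (a (d_mu d) + a (d_pi d)) / 2 else a l.

Section Cases.
Variables (C : {set 'I_N}) (a : 'I_N -> R) (d : draw N).
Let v := (a (d_mu d) + a (d_pi d)) / 2.
Let SA := \sum_(l in C) a l.
Let SB := \sum_(l in ~: C) a l.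

Lemma casePlus : d_mu d \in C -> d_ka d \notin C ->
  [/\ #|step C d| = #|C|.+1,
     \sum_(l in step C d) ap a d l = SA + v
   & \sum_(l in ~: step C d) ap a d l = SB - a (d_ka d)].
Proof.
move=> muC kaC; rewrite /step muC /ap; split.
- by rewrite cardsU1 kaC.
- by rewrite sum_mod setU11 sumU1 //; rewrite /SA /v; ring.
- rewrite sum_mod !inE eqxx /= addr0 setCU1 sumD1 //.
  by rewrite inE.
Qed.

Lemma caseMinus : d_mu d \notin C -> d_ka d \in C ->
  [/\ #|step C d| = #|C|.-1,
     \sum_(l in step C d) ap a d l = SA - a (d_ka d)
   & \sum_(l in ~: step C d) ap a d l = SB + v].
Proof.
move=> muC kaC; rewrite /step (negPf muC) /ap; split.
- by rewrite (cardsD1 (d_ka d) C) kaC.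
- by rewrite sum_mod !inE eqxx /= addr0 sumD1.
- rewrite sum_mod setCD1 setU11 sumU1; last by rewrite inE negbK.
  by rewrite /SB /v; ring.
Qed.

Lemma caseZa : d_mu d \in C -> d_ka d \in C ->
  [/\ #|step C d| = #|C|,
     \sum_(l in step C d) ap a d l = SA + v - a (d_ka d)
   & \sum_(l in ~: step C d) ap a d l = SB].
Proof.
move=> muC kaC; rewrite /step muC setU1_in // /ap; split => //.
- by rewrite sum_mod kaC /SA /v; ring.
- by rewrite sum_mod inE kaC addr0.
Qed.

Lemma caseZb : d_mu d \notin C -> d_ka d \notin C ->
  [/\ #|step C d| = #|C|,
     \sum_(l in step C d) ap a d l = SA
   & \sum_(l in ~: step C d) ap a d l = SB + v - a (d_ka d)].
Proof.
move=> muC kaC; rewrite /step (negPf muC) setD1_notin // /ap; split => //.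
- by rewrite sum_mod (negPf kaC) addr0.
- by rewrite sum_mod inE kaC /SB /v; ring.
Qed.

End Cases.

End Kernel.

Section Weighted.
Variables (R : realFieldType) (N : nat) (s : R) (C : {set 'I_N}) (a : 'I_N -> R).

Lemma wsum (A B : {set 'I_N}) (F : draw N -> R) (K den e0 e1 e3 : R) :
  (forall d, d_mu d \in A -> d_ka d \in B ->
     F d = K * (den * (e0 + e1 * ((a (d_mu d) + a (d_pi d)) / 2) + e3 * a (d_ka d)))) ->
  \sum_(d : draw N | (d_mu d \in A) && (d_ka d \in B)) F d =
  K * den * (e0 * (#|A|%:R * N%:R * #|B|%:R)
     + e1 / 2 * ((\sum_(i in A) a i) * N%:R * #|B|%:R + #|A|%:R * (\sum_j a j) * #|B|%:R)
     + e3 * (#|A|%:R * N%:R * (\sum_(l in B) a l))).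
Proof.
move=> HF.
rewrite (eq_bigr (fun d => K * den * e0 + (K * den * e1 / 2) * a (d_mu d)
   + (K * den * e1 / 2) * a (d_pi d) + (K * den * e3) * a (d_ka d))); last first.
  by move=> d /andP[h1 h2]; rewrite HF //; ring.
rewrite sum_draw_lin; ring.
Qed.

Definition XAp (d : draw N) : R :=
  (#|step C d|%:R)^-1 * \sum_(l in step C d) ap a d l.
Definition XBp (d : draw N) : R :=
  ((N - #|step C d|)%:R)^-1 * \sum_(l in ~: step C d) ap a d l.

Hypothesis Hs : 0 < s.
Hypothesis HC : (0 < #|C| < N)%N.

Let W := \sum_(j : 'I_N) dweight s C j.
Let kR : R := #|C|%:R.
Let NR : R := N%:R.
Let SA := \sum_(l in C) a l.
Let SB := \sum_(l in ~: C) a l.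
Let XA := kR^-1 * SA.
Let XB := (NR - kR)^-1 * SB.
Let K1 := NR^-1 * NR^-1 * (1 / W).
Let K2 := NR^-1 * NR^-1 * ((1 + s) / W).

Lemma W_gt0 : 0 < W.
Proof.
have N0 : (0 < N)%N by case/andP: HC => h1 h2; apply: leq_ltn_trans h2.
apply: (@lt_le_trans _ _ (\sum_(j : 'I_N) (1:R))).
  by rewrite sumr_const card_ord ltr0n.
apply: ler_sum => j _; rewrite /dweight; case: (j \in C) => //.
by rewrite lerDl ltW.
Qed.

Lemma W_neq0 : W != 0.
Proof. by rewrite gt_eqF // W_gt0. Qed.

Lemma kR_neq0 : kR != 0.
Proof. by rewrite pnatr_eq0 -lt0n; case/andP: HC. Qed.

Lemma NR_neq0 : NR != 0.
Proof. by rewrite pnatr_eq0 -lt0n; case/andP: HC => h1 h2; apply: leq_ltn_trans h2. Qed.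

Lemma cardCn : #|~: C| = (N - #|C|)%N.
Proof. by have := cardsC C; rewrite card_ord; lia. Qed.

Lemma cardC : #|~: C|%:R = NR - kR.
Proof.
by rewrite cardCn natrB //; case/andP: HC => _ /ltnW.
Qed.

Lemma NkR_neq0 : NR - kR != 0.
Proof.
by rewrite -cardC pnatr_eq0 cardCn subn_eq0 -ltnNge; case/andP: HC.
Qed.

Lemma kR1_neq0 : kR + 1 != 0.
Proof. by rewrite natr1 pnatr_eq0. Qed.

Lemma two_neq0 : (2:R) != 0.
Proof. by rewrite pnatr_eq0. Qed.

Lemma NkR1_neq0 : NR - kR + 1 != 0.
Proof.
by rewrite -cardC natr1 pnatr_eq0.
Qed.

Ltac sidec := repeat (apply/andP; split); first
  [ exact: kR_neq0 | exact: NR_neq0 | exact: NkR_neq0 | exact: W_neq0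
  | exact: kR1_neq0 | exact: two_neq0 | exact: NkR1_neq0 | idtac ].

Lemma sumall : \sum_(j : 'I_N) a j = SA + SB.
Proof.
rewrite (bigID (fun j => j \in C)) /=; congr (_ + _).
by apply: eq_bigl => j; rewrite inE.
Qed.

Lemma tprob_in d : d_ka d \in C -> tprob s C d = K1.
Proof. by move=> h; rewrite /tprob /dweight h. Qed.
Lemma tprob_out d : d_ka d \notin C -> tprob s C d = K2.
Proof. by move=> h; rewrite /tprob /dweight (negPf h). Qed.

Definition rhoP := K2 * (kR * NR * (NR - kR)).

Lemma tPlus : \sum_(d : draw N | (d_mu d \in C) && (d_ka d \in ~: C)) tprob s C d = rhoP.
Proof.
rewrite (@wsum C (~: C) _ K2 1 1 0 0); last first.
  by move=> d _; rewrite inE => h; rewrite tprob_out //; ring.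
rewrite cardC /rhoP; ring.
Qed.

Lemma aPlus : \sum_(d : draw N | (d_mu d \in C) && (d_ka d \in ~: C)) tprob s C d * XAp d
  = rhoP * ((1 - (NR - kR) / (2 * NR * (kR + 1))) * XA + (NR - kR) / (2 * NR * (kR + 1)) * XB).
Proof.
rewrite (@wsum C (~: C) _ K2 (kR + 1)^-1 SA 1 0); last first.
  move=> d muC; rewrite inE => kaC; have [h1 h2 h3] := casePlus a muC kaC.
  rewrite tprob_out // /XAp h1 h2 -addn1 natrD /kR /SA; ring.
rewrite ?cardC sumall /rhoP /XA /XB /K2 -/NR -/kR -/SA -/SB.
field; sidec.
Qed.

Lemma NkR_nat : (N - #|C|)%:R = NR - kR.
Proof. by rewrite -cardCn cardC. Qed.

Lemma bPlus : #|C|.+1 != N ->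
  \sum_(d : draw N | (d_mu d \in C) && (d_ka d \in ~: C)) tprob s C d * XBp d
  = rhoP * XB.
Proof.
move=> hk.
have e : (N - #|C|.+1)%:R = NR - (kR + 1).
  by rewrite natrB ?natr1 //; case/andP: HC.
have hne : NR - (kR + 1) != 0.
  rewrite -e pnatr_eq0 subn_eq0 -ltnNge; case/andP: HC => _ h.
  by rewrite ltn_neqAle hk.
rewrite (@wsum C (~: C) _ K2 (NR - (kR + 1))^-1 SB 0 (-1)); last first.
  move=> d muC; rewrite inE => kaC; have [h1 h2 h3] := casePlus a muC kaC.
  rewrite tprob_out // /XBp h1 h3 e /SB; ring.
rewrite ?cardC sumall /rhoP /XA /XB /K2 -/NR -/kR -/SA -/SB.
field; sidec; assumption.
Qed.

Definition rhoM := K1 * ((NR - kR) * NR * kR).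

Lemma tMinus : \sum_(d : draw N | (d_mu d \in ~: C) && (d_ka d \in C)) tprob s C d = rhoM.
Proof.
rewrite (@wsum (~: C) C _ K1 1 1 0 0); last first.
  by move=> d _ h; rewrite tprob_in //; ring.
rewrite cardC /rhoM; ring.
Qed.

Lemma aMinus : #|C|.-1 != 0%N ->
  \sum_(d : draw N | (d_mu d \in ~: C) && (d_ka d \in C)) tprob s C d * XAp d
  = rhoM * XA.
Proof.
move=> hk.
have e : (#|C|.-1)%:R = kR - 1.
  by rewrite -subn1 natrB //; case/andP: HC.
have hne : kR - 1 != 0 by rewrite -e pnatr_eq0.
rewrite (@wsum (~: C) C _ K1 (kR - 1)^-1 SA 0 (-1)); last first.
  move=> d; rewrite inE => muC kaC; have [h1 h2 h3] := caseMinus a muC kaC.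
  rewrite tprob_in // /XAp h1 h2 e /SA; ring.
rewrite ?cardC sumall /rhoM /XA /XB /K1 -/NR -/kR -/SA -/SB.
field; sidec; assumption.
Qed.

Lemma bMinus :
  \sum_(d : draw N | (d_mu d \in ~: C) && (d_ka d \in C)) tprob s C d * XBp d
  = rhoM * (kR / (2 * NR * (NR - kR + 1)) * XA + (1 - kR / (2 * NR * (NR - kR + 1))) * XB).
Proof.
have e : (N - #|C|.-1)%:R = NR - kR + 1.
  have -> : (N - #|C|.-1)%N = (N - #|C|).+1 by case/andP: HC; lia.
  by rewrite -natr1 NkR_nat.
rewrite (@wsum (~: C) C _ K1 (NR - kR + 1)^-1 SB 1 0); last first.
  move=> d; rewrite inE => muC kaC; have [h1 h2 h3] := caseMinus a muC kaC.
  rewrite tprob_in // /XBp h1 h3 e /SB; ring.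
rewrite ?cardC sumall /rhoM /XA /XB /K1 -/NR -/kR -/SA -/SB.
field; sidec.
Qed.

Definition rhoA := K1 * (kR * NR * kR).
Definition rhoB := K2 * ((NR - kR) * NR * (NR - kR)).

Lemma tZa : \sum_(d : draw N | (d_mu d \in C) && (d_ka d \in C)) tprob s C d = rhoA.
Proof.
rewrite (@wsum C C _ K1 1 1 0 0); last first.
  by move=> d _ h; rewrite tprob_in //; ring.
rewrite /rhoA; ring.
Qed.

Lemma tZb : \sum_(d : draw N | (d_mu d \in ~: C) && (d_ka d \in ~: C)) tprob s C d = rhoB.
Proof.
rewrite (@wsum (~: C) (~: C) _ K2 1 1 0 0); last first.
  by move=> d _; rewrite inE => h; rewrite tprob_out //; ring.
rewrite cardC /rhoB; ring.
Qed.

Lemma aZa :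
  \sum_(d : draw N | (d_mu d \in C) && (d_ka d \in C)) tprob s C d * XAp d
  = rhoA * ((1 - (NR - kR) / (2 * kR * NR)) * XA + (NR - kR) / (2 * kR * NR) * XB).
Proof.
rewrite (@wsum C C _ K1 kR^-1 SA 1 (-1)); last first.
  move=> d muC kaC; have [h1 h2 h3] := caseZa a muC kaC.
  rewrite tprob_in // /XAp h1 h2 /SA /kR; ring.
rewrite ?cardC sumall /rhoA /XA /XB /K1 -/NR -/kR -/SA -/SB.
field; sidec.
Qed.

Lemma bZa :
  \sum_(d : draw N | (d_mu d \in C) && (d_ka d \in C)) tprob s C d * XBp d
  = rhoA * XB.
Proof.
rewrite (@wsum C C _ K1 (NR - kR)^-1 SB 0 0); last first.
  move=> d muC kaC; have [h1 h2 h3] := caseZa a muC kaC.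
  rewrite tprob_in // /XBp h1 h3 NkR_nat /SB; ring.
rewrite ?cardC sumall /rhoA /XA /XB /K1 -/NR -/kR -/SA -/SB.
field; sidec.
Qed.

Lemma aZb :
  \sum_(d : draw N | (d_mu d \in ~: C) && (d_ka d \in ~: C)) tprob s C d * XAp d
  = rhoB * XA.
Proof.
rewrite (@wsum (~: C) (~: C) _ K2 kR^-1 SA 0 0); last first.
  move=> d; rewrite !inE => muC kaC; have [h1 h2 h3] := caseZb a muC kaC.
  rewrite tprob_out // /XAp h1 h2 /SA /kR; ring.
rewrite ?cardC sumall /rhoB /XA /XB /K2 -/NR -/kR -/SA -/SB.
field; sidec.
Qed.

Lemma bZb :
  \sum_(d : draw N | (d_mu d \in ~: C) && (d_ka d \in ~: C)) tprob s C d * XBp d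
  = rhoB * (kR / (2 * NR * (NR - kR)) * XA + (1 - kR / (2 * NR * (NR - kR))) * XB).
Proof.
rewrite (@wsum (~: C) (~: C) _ K2 (NR - kR)^-1 SB 1 (-1)); last first.
  move=> d; rewrite !inE => muC kaC; have [h1 h2 h3] := caseZb a muC kaC.
  rewrite tprob_out // /XBp h1 h3 NkR_nat /SB; ring.
rewrite ?cardC sumall /rhoB /XA /XB /K2 -/NR -/kR -/SA -/SB.
field; sidec.
Qed.

End Weighted.

Section Comb.
Variables (R : realFieldType) (N : nat) (s : R) (Y0 : {set 'I_N}).

Lemma sum_tuple_rcons (F : seq (draw N) -> R) (m : nat) :
  \sum_(x : m.+1.-tuple (draw N)) F x =
  \sum_(t : m.-tuple (draw N)) \sum_(d : draw N) F (rcons t d).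
Proof.
rewrite pair_bigA /=.
pose h := fun p : m.-tuple (draw N) * draw N => [tuple of rcons p.1 p.2].
pose g := fun x : m.+1.-tuple (draw N) =>
  ([tuple of belast (thead x) (behead x)], last (thead x) (behead x)).
rewrite (reindex h) /=; last first.
  exists g => [[t d] _ | x _].
    set u := h (t, d).
    have hu : (u : seq _) = thead u :: behead u by rewrite {1}(tuple_eta u).
    have := lastI (thead u) (behead u); rewrite -hu /= => /rcons_inj [e1 e2].
    rewrite /g; f_equal; last by rewrite -e2.
    by apply: val_inj; rewrite /= -e1.
  have hu : (x : seq _) = thead x :: behead x by rewrite {1}(tuple_eta x).
  by apply: val_inj; rewrite /= -lastI -hu.
by [].
Qed.

Lemma y_rcons (n : nat) (y : seq nat) : size y = n.+2 ->
  y = rcons (take n.+1 y) (nth 0%N y n.+1).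
Proof.
move=> hy; rewrite -take_nth; last by rewrite hy.
by rewrite take_oversize // hy.
Qed.

Lemma comb (n : nat) (y : seq nat) (X G : seq (draw N) -> R) (rho : R) :
  size y = n.+2 ->
  (forall t : n.-tuple (draw N), Ypath Y0 t == take n.+1 y ->
     \sum_(d : draw N | #|step (config Y0 t) d| == nth 0%N y n.+1)
        tprob s (config Y0 t) d * X (rcons t d) = rho * G t) ->
  \sum_(x : n.+1.-tuple (draw N) | Ypath Y0 x == y) pathprob s Y0 x * X x =
  rho * \sum_(t : n.-tuple (draw N) | Ypath Y0 t == take n.+1 y) pathprob s Y0 t * G t.
Proof.
move=> hy H.
rewrite big_mkcond (sum_tuple_rcons (fun x => if Ypath Y0 x == y then pathprob s Y0 x * X x else 0)).
rewrite mulr_sumr [RHS]big_mkcond /=.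
apply: eq_bigr => t _.
under eq_bigr => d _ do rewrite Ypath_rcons [X in _ == X](y_rcons hy) eqseq_rcons pathprob_rcons.
case: (boolP (Ypath Y0 t == take n.+1 y)) => hP /=.
  rewrite -big_mkcond /= mulrCA -H // mulr_sumr.
  by apply: eq_bigr => d _; ring.
by rewrite big1.
Qed.

End Comb.

Section Link.
Variables (R : realFieldType) (N : nat) (s : R) (Y0 : {set 'I_N}).

Definition aw (t : seq (draw N)) (l : 'I_N) : R := \sum_(l' in Y0) Aw R t l l'.

Lemma aw_rcons t d l : aw (rcons t d) l = ap (aw t) d l.
Proof.
rewrite /aw /ap; under eq_bigr => l' _ do rewrite Aw_rcons.
case: eqP => _ //.
by rewrite -mulr_suml big_split.
Qed.

Lemma XiA_rcons t d : XiA R Y0 (rcons t d) = XAp (config Y0 t) (aw t) d.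
Proof.
rewrite /XiA /XAp config_rcons; f_equal.
by apply: eq_bigr => l _; rewrite -aw_rcons.
Qed.

Lemma XiB_rcons t d : XiB R Y0 (rcons t d) = XBp (config Y0 t) (aw t) d.
Proof.
rewrite /XiB /XBp config_rcons; f_equal.
by apply: eq_bigr => l _; rewrite -aw_rcons.
Qed.

Lemma W_val (C : {set 'I_N}) :
  \sum_(j : 'I_N) dweight s C j = #|C|%:R + #|~: C|%:R * (1 + s).
Proof.
rewrite (bigID (fun j => j \in C)) /=; congr (_ + _).
  by rewrite (eq_bigr (fun=> 1)) ?sumr_const // => j h; rewrite /dweight h.
rewrite (eq_bigl (fun j => j \in ~: C)); last by move=> j; rewrite inE.
rewrite (eq_bigr (fun=> 1 + s)); last by move=> j; rewrite inE => /negPf h; rewrite /dweight h.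
by rewrite sumr_const mulr_natl.
Qed.

Lemma W_card (C C' : {set 'I_N}) : #|C| = #|C'| ->
  \sum_(j : 'I_N) dweight s C j = \sum_(j : 'I_N) dweight s C' j.
Proof.
move=> h; have e : #|~: C| = #|~: C'| by have := cardsC C; have := cardsC C'; lia.
by rewrite !W_val h e.
Qed.

Lemma card_step (C : {set 'I_N}) (d : draw N) :
  #|step C d| = if d_mu d \in C then (if d_ka d \in C then #|C| else #|C|.+1)
                else (if d_ka d \in C then #|C|.-1 else #|C|).
Proof.
case: (boolP (d_mu d \in C)) => h1; case: (boolP (d_ka d \in C)) => h2.
- by case: (caseZa (fun _ => 0 : R) h1 h2).
- by case: (casePlus (fun _ => 0 : R) h1 h2).
- by case: (caseMinus (fun _ => 0 : R) h1 h2).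
- by case: (caseZb (fun _ => 0 : R) h1 h2).
Qed.

Lemma nth_Ypath (ds : seq (draw N)) : nth 0%N (Ypath Y0 ds) (size ds) = #|config Y0 ds|.
Proof.
by rewrite /Ypath (nth_map 0%N) ?size_iota // nth_iota // add0n take_size.
Qed.

End Link.

Section Final.
Variables (R : realFieldType) (N : nat) (s : R) (Y0 : {set 'I_N}).

Lemma rho_card (C C' : {set 'I_N}) : #|C| = #|C'| ->
  [/\ rhoP s C = rhoP s C', rhoM s C = rhoM s C', rhoA s C = rhoA s C'
    & rhoB s C = rhoB s C'].
Proof.
by move=> h; rewrite /rhoP /rhoM /rhoA /rhoB (W_card s h) h.
Qed.

Lemma condE_lin n y (X1 X2 : seq (draw N) -> R) (al be : R) :
  condE s (fun t => al * X1 t + be * X2 t) Y0 n y =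
  al * condE s X1 Y0 n y + be * condE s X2 Y0 n y.
Proof.
rewrite /condE.
under eq_bigr => t _ do rewrite mulrDr.
rewrite big_split /=.
under eq_bigr => t _ do rewrite mulrCA.
under [X in _ + X]eq_bigr => t _ do rewrite mulrCA.
rewrite -!mulr_sumr.
by rewrite mulrDl !mulrA.
Qed.

Lemma condE_step n y (X G : seq (draw N) -> R) (rho : R) :
  size y = n.+2 -> 0 < Yprob s Y0 n.+1 y ->
  (forall t : n.-tuple (draw N), Ypath Y0 t == take n.+1 y ->
     \sum_(d : draw N | #|step (config Y0 t) d| == nth 0%N y n.+1)
        tprob s (config Y0 t) d = rho) ->
  (forall t : n.-tuple (draw N), Ypath Y0 t == take n.+1 y ->
     \sum_(d : draw N | #|step (config Y0 t) d| == nth 0%N y n.+1)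
        tprob s (config Y0 t) d * X (rcons t d) = rho * G t) ->
  condE s X Y0 n.+1 y = condE s G Y0 n (take n.+1 y).
Proof.
move=> hy hpos H1 H2.
have hY : Yprob s Y0 n.+1 y = rho * Yprob s Y0 n (take n.+1 y).
  have e1 : forall m (z : seq nat), Yprob s Y0 m z =
      \sum_(x : m.-tuple (draw N) | Ypath Y0 x == z) pathprob s Y0 x * (fun _ => 1) x.
    by move=> m z; apply: eq_bigr => x _; rewrite mulr1.
  rewrite !e1; apply: (@comb R N s Y0 n y (fun _ => 1) (fun _ => 1) rho hy) => t ht.
  rewrite mulr1 -(H1 t ht).
  by apply: eq_bigr => d _; rewrite mulr1.
rewrite /condE (comb hy H2) -/(Yprob s Y0 n.+1 y) hY.
have : rho * Yprob s Y0 n (take n.+1 y) != 0 by rewrite -hY gt_eqF.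
rewrite mulf_eq0 negb_or => /andP[h1 h2].
field; by rewrite h1 h2.
Qed.

End Final.

End Work.
Import Work.

Lemma card_step_k (R : realFieldType) (N : nat) (C : {set 'I_N}) (d : draw N) (k : nat) :
  #|C| = k ->
  #|step C d| = if d_mu d \in C then (if d_ka d \in C then k else k.+1)
                else (if d_ka d \in C then k.-1 else k).
Proof. by move=> <-; apply: (card_step R). Qed.

Lemma split_zero (R : realFieldType) (N : nat) (C : {set 'I_N}) (k : nat) (F : draw N -> R) :
  #|C| = k -> (0 < k)%N ->
  \sum_(d : draw N | #|step C d| == k) F d =
  \sum_(d : draw N | (d_mu d \in C) && (d_ka d \in C)) F d +
  \sum_(d : draw N | (d_mu d \in ~: C) && (d_ka d \in ~: C)) F d.
Proof.
move=> hC hk; rewrite (bigID (fun d => d_mu d \in C)) /=.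
congr (_ + _); apply: eq_bigl => d; rewrite (@card_step_k R N _ d _ hC);
  by rewrite ?inE; case: (d_mu d \in C); case: (d_ka d \in C); move: hk; clear hC; case: k => // k' _ /=;
     rewrite ?eqxx //; apply/negbTE/eqP; lia.
Qed.

Lemma ev_plus (k : nat) (b1 b2 : bool) : (0 < k)%N ->
  ((if b1 then (if b2 then k else k.+1) else (if b2 then k.-1 else k)) == k.+1) = b1 && ~~ b2.
Proof. by case: b1; case: b2 => /=; case: k => // k' _; rewrite ?eqxx //; apply/negbTE/eqP; lia. Qed.

Lemma ev_minus (k : nat) (b1 b2 : bool) : (0 < k)%N ->
  ((if b1 then (if b2 then k else k.+1) else (if b2 then k.-1 else k)) == k.-1) = ~~ b1 && b2.
Proof. by case: b1; case: b2 => /=; case: k => // k' _; rewrite ?eqxx //; apply/negbTE/eqP; lia. Qed.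

Lemma ev_zero (k : nat) (b1 b2 : bool) : (0 < k)%N ->
  ((if b1 then (if b2 then k else k.+1) else (if b2 then k.-1 else k)) == k) = (b1 && b2) || (~~ b1 && ~~ b2).
Proof. by case: b1; case: b2 => /=; case: k => // k' _; rewrite ?eqxx //; apply/negbTE/eqP; lia. Qed.

Theorem part123 (R : realFieldType) (N : nat) (s : R)
  (HN : (2 <= N)%N) (Hs : 0 < s) (Y0 : {set 'I_N}) :
  (forall (n k : nat) (y : seq nat),
     size y = n.+2 -> 0 < Yprob s Y0 n.+1 y ->
     nth 0%N y n = k -> (1 <= k <= N - 1)%N ->
     let U := Ucond s Y0 n (take n.+1 y) in
     let V := Vcond s Y0 n (take n.+1 y) in
     let U' := Ucond s Y0 n.+1 y in
     let V' := Vcond s Y0 n.+1 y in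
     let kR : R := k%:R in
     let NR : R := N%:R in
     [/\ (nth 0%N y n.+1 = k.+1 ->
            let b := (NR - kR) / (2 * NR * (kR + 1)) in
            U' = (1 - b) * U + b * V /\
            (k.+1 != N -> V' = V)),
         (nth 0%N y n.+1 = k.-1 ->
            let c := kR / (2 * NR * (NR - kR + 1)) in
            (k.-1 != 0%N -> U' = U) /\
            V' = c * U + (1 - c) * V) &
         (nth 0%N y n.+1 = k ->
            let D := kR ^+ 2 + (1 + s) * (NR - kR) ^+ 2 in
            let a0 := kR ^+ 2 / D in
            let a1 := (1 + s) * (NR - kR) ^+ 2 / D in
            let p := (NR - kR) / (2 * kR * NR) in
            let q := kR / (2 * NR * (NR - kR)) in
            U' = a0 * ((1 - p) * U + p * V) + a1 * U /\
            V' = a0 * V + a1 * (q * U + (1 - q) * V))]).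
Proof.
move=> n k y hy hpos hyn hk U V U' V' kR NR.
pose P := fun t : n.-tuple (draw N) => Ypath Y0 t == take n.+1 y.
have hcard : forall t : n.-tuple (draw N), P t -> #|config Y0 t| = k.
  move=> t /eqP ht; rewrite -nth_Ypath size_tuple ht nth_take //.
have hk0 : (0 < k)%N by case/andP: hk.
have hC : forall t : n.-tuple (draw N), P t -> (0 < #|config Y0 t| < N)%N.
  by move=> t /hcard ->; case/andP: hk => h1 h2; apply/andP; split => //; lia.
have [t0 Pt0] : exists t0 : n.-tuple (draw N), P t0.
  case: (pickP P) => [t0 h|h]; first by exists t0.
  move: hpos; rewrite (_ : Yprob s Y0 n.+1 y = 0) ?ltxx //.
  have e1 : forall m (z : seq nat), Yprob s Y0 m z =
      \sum_(x : m.-tuple (draw N) | Ypath Y0 x == z) pathprob s Y0 x * (fun _ => 1) x.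
    by move=> m z; apply: eq_bigr => x _; rewrite mulr1.
  rewrite e1 (@comb R N s Y0 n y (fun _ => 1) (fun _ => 1) 0 hy) ?mul0r //.
  by move=> t ht; have := h t; rewrite /P ht.
set C0 := config Y0 t0.
have hc0 : forall t : n.-tuple (draw N), P t -> #|config Y0 t| = #|C0|.
  by move=> t ht; rewrite (hcard t ht) (hcard t0 Pt0).
have NkR : forall t : n.-tuple (draw N), P t -> (N - #|config Y0 t|)%:R = NR - kR.
  by move=> t ht; rewrite natrB (hcard t ht) //; case/andP: hk => _ h; lia.
split.
- move=> hy1 b; split.
  + rewrite /U' /Ucond (@condE_step R N s Y0 n y _
        (fun t => (1 - b) * XiA R Y0 t + b * XiB R Y0 t) (rhoP s C0) hy hpos).
    * by rewrite condE_lin.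
    * move=> t ht; rewrite hy1.
      rewrite (eq_bigl (fun d => (d_mu d \in config Y0 t) && (d_ka d \in ~: config Y0 t))); last first.
        by move=> d; rewrite (@card_step_k R N _ d _ (hcard t ht)) ev_plus // inE.
      rewrite (tPlus (aw R Y0 t) Hs (hC t ht)).
      by case: (rho_card s (hc0 t ht)).
    * move=> t ht; rewrite hy1.
      rewrite (eq_bigl (fun d => (d_mu d \in config Y0 t) && (d_ka d \in ~: config Y0 t))); last first.
        by move=> d; rewrite (@card_step_k R N _ d _ (hcard t ht)) ev_plus // inE.
      under eq_bigr => d _ do rewrite XiA_rcons.
      rewrite (aPlus (aw R Y0 t) Hs (hC t ht)).
      case: (rho_card s (hc0 t ht)) => -> _ _ _.
      by rewrite /XiA /XiB (NkR t ht) /aw /b /kR /NR (hcard t ht).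
  + move=> hkN.
    rewrite /V' /Vcond (@condE_step R N s Y0 n y _
        (fun t => 0 * XiA R Y0 t + 1 * XiB R Y0 t) (rhoP s C0) hy hpos).
    * by rewrite condE_lin mul0r add0r mul1r.
    * move=> t ht; rewrite hy1.
      rewrite (eq_bigl (fun d => (d_mu d \in config Y0 t) && (d_ka d \in ~: config Y0 t))); last first.
        by move=> d; rewrite (@card_step_k R N _ d _ (hcard t ht)) ev_plus // inE.
      rewrite (tPlus (aw R Y0 t) Hs (hC t ht)).
      by case: (rho_card s (hc0 t ht)).
    * move=> t ht; rewrite hy1.
      rewrite (eq_bigl (fun d => (d_mu d \in config Y0 t) && (d_ka d \in ~: config Y0 t))); last first.
        by move=> d; rewrite (@card_step_k R N _ d _ (hcard t ht)) ev_plus // inE.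
      under eq_bigr => d _ do rewrite XiB_rcons.
      rewrite (bPlus (aw R Y0 t) Hs (hC t ht)); last by rewrite (hcard t ht).
      case: (rho_card s (hc0 t ht)) => -> _ _ _.
      by rewrite mul0r add0r mul1r /XiA /XiB (NkR t ht) /aw /kR /NR (hcard t ht).
- move=> hy1 c; split.
  + move=> hk1.
    rewrite /U' /Ucond (@condE_step R N s Y0 n y _
        (fun t => 1 * XiA R Y0 t + 0 * XiB R Y0 t) (rhoM s C0) hy hpos).
    * by rewrite condE_lin mul0r addr0 mul1r.
    * move=> t ht; rewrite hy1.
      rewrite (eq_bigl (fun d => (d_mu d \in ~: config Y0 t) && (d_ka d \in config Y0 t))); last first.
        by move=> d; rewrite (@card_step_k R N _ d _ (hcard t ht)) ev_minus // inE.
      rewrite (tMinus (aw R Y0 t) Hs (hC t ht)).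
      by case: (rho_card s (hc0 t ht)).
    * move=> t ht; rewrite hy1.
      rewrite (eq_bigl (fun d => (d_mu d \in ~: config Y0 t) && (d_ka d \in config Y0 t))); last first.
        by move=> d; rewrite (@card_step_k R N _ d _ (hcard t ht)) ev_minus // inE.
      under eq_bigr => d _ do rewrite XiA_rcons.
      rewrite (aMinus (aw R Y0 t) Hs (hC t ht)); last by rewrite (hcard t ht).
      case: (rho_card s (hc0 t ht)) => _ -> _ _.
      by rewrite mul0r addr0 mul1r /XiA /aw /kR /NR (hcard t ht).
  + rewrite /V' /Vcond (@condE_step R N s Y0 n y _
        (fun t => c * XiA R Y0 t + (1 - c) * XiB R Y0 t) (rhoM s C0) hy hpos).
    * by rewrite condE_lin.
    * move=> t ht; rewrite hy1.
      rewrite (eq_bigl (fun d => (d_mu d \in ~: config Y0 t) && (d_ka d \in config Y0 t))); last first.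
        by move=> d; rewrite (@card_step_k R N _ d _ (hcard t ht)) ev_minus // inE.
      rewrite (tMinus (aw R Y0 t) Hs (hC t ht)).
      by case: (rho_card s (hc0 t ht)).
    * move=> t ht; rewrite hy1.
      rewrite (eq_bigl (fun d => (d_mu d \in ~: config Y0 t) && (d_ka d \in config Y0 t))); last first.
        by move=> d; rewrite (@card_step_k R N _ d _ (hcard t ht)) ev_minus // inE.
      under eq_bigr => d _ do rewrite XiB_rcons.
      rewrite (bMinus (aw R Y0 t) Hs (hC t ht)).
      case: (rho_card s (hc0 t ht)) => _ -> _ _.
      by rewrite /XiA /XiB (NkR t ht) /aw /c /kR /NR (hcard t ht).
- move=> hy1 D a0 a1 p q.
  have hk' : (kR != 0) by rewrite pnatr_eq0 -lt0n.
  have hN' : (NR != 0) by rewrite pnatr_eq0; lia.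
  have hNk : (NR - kR != 0).
    by rewrite -natrB ?pnatr_eq0 ?subn_eq0 -?ltnNge; case/andP: hk => _ h; lia.
  have hD : D != 0.
    rewrite gt_eqF // /D; apply: (@lt_le_trans _ _ (kR ^+ 2)).
      by rewrite exprn_gt0 // ltr0n.
    rewrite lerDl mulr_ge0 // ?sqr_ge0 //; apply: addr_ge0 => //; exact: ltW.
  split.
  + rewrite /U' /Ucond (@condE_step R N s Y0 n y _
        (fun t => (a0 * (1 - p) + a1) * XiA R Y0 t + (a0 * p) * XiB R Y0 t)
        (rhoA s C0 + rhoB s C0) hy hpos).
    * rewrite condE_lin /U /V /Ucond /Vcond /a0 /a1 /p; ring.
    * move=> t ht; rewrite hy1 (@split_zero R N _ _ _ (hcard t ht) hk0).
      rewrite (tZa s (config Y0 t) (aw R Y0 t)) (tZb (aw R Y0 t) Hs (hC t ht)).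
      by case: (rho_card s (hc0 t ht)) => _ _ -> ->.
    * move=> t ht; under eq_bigr => d _ do rewrite XiA_rcons.
      rewrite hy1 (@split_zero R N _ _ _ (hcard t ht) hk0).
      rewrite (aZa (aw R Y0 t) Hs (hC t ht)) (aZb (aw R Y0 t) Hs (hC t ht)).
      case: (rho_card s (hc0 t ht)) => _ _ <- <-.
      have hW := W_neq0 Hs (hC t ht).
      rewrite /rhoA /rhoB /XiA /XiB (NkR t ht) /aw.
      move: hW; rewrite (hcard t ht) /a0 /a1 /p /D /kR /NR => hW.
      have h2 : (2 : R) != 0 by rewrite pnatr_eq0.
      by field; repeat (apply/andP; split); try assumption.
  + rewrite /V' /Vcond (@condE_step R N s Y0 n y _
        (fun t => (a1 * q) * XiA R Y0 t + (a0 + a1 * (1 - q)) * XiB R Y0 t)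
        (rhoA s C0 + rhoB s C0) hy hpos).
    * rewrite condE_lin /U /V /Ucond /Vcond /a0 /a1 /q; ring.
    * move=> t ht; rewrite hy1 (@split_zero R N _ _ _ (hcard t ht) hk0).
      rewrite (tZa s (config Y0 t) (aw R Y0 t)) (tZb (aw R Y0 t) Hs (hC t ht)).
      by case: (rho_card s (hc0 t ht)) => _ _ -> ->.
    * move=> t ht; under eq_bigr => d _ do rewrite XiB_rcons.
      rewrite hy1 (@split_zero R N _ _ _ (hcard t ht) hk0).
      rewrite (bZa (aw R Y0 t) Hs (hC t ht)) (bZb (aw R Y0 t) Hs (hC t ht)).
      case: (rho_card s (hc0 t ht)) => _ _ <- <-.
      have hW := W_neq0 Hs (hC t ht).
      rewrite /rhoA /rhoB /XiA /XiB (NkR t ht) /aw.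
      move: hW; rewrite (hcard t ht) /a0 /a1 /q /D /kR /NR => hW.
      have h2 : (2 : R) != 0 by rewrite pnatr_eq0.
      by field; repeat (apply/andP; split); try assumption.
Qed.

Lemma nth_Ypath_i (N : nat) (Y0 : {set 'I_N}) (ds : seq (draw N)) i :
  (i <= size ds)%N -> nth 0%N (Ypath Y0 ds) i = #|config Y0 (take i ds)|.
Proof.
by move=> hi; rewrite /Ypath (nth_map 0%N) ?size_iota // nth_iota // add0n.
Qed.

Theorem part4 (R : realFieldType) (N : nat) (s : R)
  (HN : (2 <= N)%N) (Hs : 0 < s) (Y0 : {set 'I_N}) :
  (forall (m : nat) (y : seq nat),
     size y = m.+1 -> 0 < Yprob s Y0 m y ->
     (0 < #|Y0| < N)%N ->
     let U := Ucond s Y0 m.-1 (take m y) in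
     let V := Vcond s Y0 m.-1 (take m y) in
     let U' := Ucond s Y0 m y in
     let V' := Vcond s Y0 m y in
     let e : R := (2 * N%:R ^+ 2)^-1 in
     (forall i, (i < m)%N -> nth 0%N y i != 0%N /\ nth 0%N y i != N) ->
     (nth 0%N y m = 0%N -> V' = e * U + (1 - e) * V) /\
     (nth 0%N y m = N -> U' = (1 - e) * U + e * V)).
Proof.
move=> m y hy hpos hY0.
have [x /eqP hx] : exists x : m.-tuple (draw N), Ypath Y0 x == y.
  case: (pickP (fun x : m.-tuple (draw N) => Ypath Y0 x == y)) => [x h|h]; first by exists x.
  by move: hpos; rewrite /Yprob big_pred0 // ltxx.
have hy0 : nth 0%N y 0 = #|Y0| by rewrite -hx nth_Ypath_i // take0.
case: m hy hpos x hx => [|n] hy hpos x hx U V U' V' e hi.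
  by rewrite hy0; split => h; move: hY0; rewrite h ?ltnn // andbF.
have hsz : size x = n.+1 by rewrite size_tuple.
set k := nth 0%N y n.
have [hk0 hkN] := hi n (ltnSn n).
have hkle : (k <= N)%N.
  rewrite /k -hx nth_Ypath_i ?hsz //.
  by apply: leq_trans (max_card _) _; rewrite card_ord.
set dd := nth (thead x) x n.
have hst : nth 0%N y n.+1 = #|step (config Y0 (take n x)) dd|.
  rewrite -hx nth_Ypath_i ?hsz // (take_nth (thead x)) ?hsz //.
  by rewrite config_rcons.
have hkc : #|config Y0 (take n x)| = k by rewrite /k -hx nth_Ypath_i // hsz.
have hcs := @card_step_k R N _ dd _ hkc.
have hkk : (1 <= k <= N - 1)%N by apply/andP; split; [rewrite lt0n | lia].
have [P1 P2 P3] := @part123 R N s HN Hs Y0 n k y hy hpos erefl hkk.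
have hN' : (N%:R : R) != 0 by rewrite pnatr_eq0; lia.
have h2 : (2 : R) != 0 by rewrite pnatr_eq0.
split => hm; rewrite ?/V' ?/U'.
- have k1 : k = 1%N.
    move: hm; rewrite hst hcs; case: (_ \in _); case: (_ \in _) => //; lia.
  have e1 : nth 0%N y n.+1 = k.-1 by rewrite hm k1.
  have [_ ->] := P2 e1; rewrite /U /V /=.
  rewrite /e k1; congr (_ * _ + _ * _); [|congr (_ - _)]; field; by rewrite ?h2 ?hN'.
- have k1 : k = N.-1.
    move: hm; rewrite hst hcs; case: (_ \in _); case: (_ \in _) => //; lia.
  have e1 : nth 0%N y n.+1 = k.+1 by rewrite hm k1; lia.
  have [-> _] := P1 e1; rewrite /U /V /=.
  have ek : (k%:R : R) = N%:R - 1 by rewrite k1 -subn1 natrB //; lia.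
  rewrite /e ek; congr (_ * _ + _ * _); [congr (_ - _)|]; field; by rewrite ?h2 ?hN'.
Qed.

Theorem proposition3 (R : realFieldType) (N : nat) (s : R)
  (HN : (2 <= N)%N) (Hs : 0 < s) (Y0 : {set 'I_N}) :
  (* parts (1)-(3): y = (y_0, ..., y_{n+1}) a Y-path of positive probability *)
  (forall (n k : nat) (y : seq nat),
     size y = n.+2 -> 0 < Yprob s Y0 n.+1 y ->
     nth 0%N y n = k -> (1 <= k <= N - 1)%N ->
     let U := Ucond s Y0 n (take n.+1 y) in
     let V := Vcond s Y0 n (take n.+1 y) in
     let U' := Ucond s Y0 n.+1 y in
     let V' := Vcond s Y0 n.+1 y in
     let kR : R := k%:R in
     let NR : R := N%:R in
     [/\ (nth 0%N y n.+1 = k.+1 ->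
            let b := (NR - kR) / (2 * NR * (kR + 1)) in
            U' = (1 - b) * U + b * V /\
            (k.+1 != N -> V' = V)),
         (nth 0%N y n.+1 = k.-1 ->
            let c := kR / (2 * NR * (NR - kR + 1)) in
            (k.-1 != 0%N -> U' = U) /\
            V' = c * U + (1 - c) * V) &
         (nth 0%N y n.+1 = k ->
            let D := kR ^+ 2 + (1 + s) * (NR - kR) ^+ 2 in
            let a0 := kR ^+ 2 / D in
            let a1 := (1 + s) * (NR - kR) ^+ 2 / D in
            let p := (NR - kR) / (2 * kR * NR) in
            let q := kR / (2 * NR * (NR - kR)) in
            U' = a0 * ((1 - p) * U + p * V) + a1 * U /\
            V' = a0 * V + a1 * (q * U + (1 - q) * V))])
  /\
  (* "in particular": on {T_0 = m < T_N}, resp. {T_N = m < T_0} *)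
  (forall (m : nat) (y : seq nat),
     size y = m.+1 -> 0 < Yprob s Y0 m y ->
     (0 < #|Y0| < N)%N ->
     let U := Ucond s Y0 m.-1 (take m y) in
     let V := Vcond s Y0 m.-1 (take m y) in
     let U' := Ucond s Y0 m y in
     let V' := Vcond s Y0 m y in
     let e : R := (2 * N%:R ^+ 2)^-1 in
     (forall i, (i < m)%N -> nth 0%N y i != 0%N /\ nth 0%N y i != N) ->
     (nth 0%N y m = 0%N -> V' = e * U + (1 - e) * V) /\
     (nth 0%N y m = N -> U' = (1 - e) * U + e * V)).
Proof.
split; [exact: part123 | exact: part4].
Qed.
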